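(* Let $n\ge 1$ and let $\Omega=\Omega_e\cup\Omega_o\subset\mathbb{Z}_2^n\setminus\{\mathbf 0\}$, where $\Omega_e$ and $\Omega_o$ are both nonempty, every tuple in $\Omega_e$ has even Hamming weight, and every tuple in $\Omega_o$ has odd Hamming weight. Then $\mathrm{NEPS}(P_3,\ldots,P_3;\Omega)$ (with $n$ factors) does not exhibit perfect state transfer between any pair of distinct vertices. *)

(* Defs.v *)
From mathcomp Require Import all_boot.
From Stdlib Require Import Reals Factorial.

Set Implicit Arguments.
Unset Strict Implicit.
Unset Printing Implicit Defensive.

Definition z2tuple (n : nat) := {ffun 'I_n -> bool}.

Definition hweight (n : nat) (b : z2tuple n) : nat := #|[set i | b i]|.

Definition z2zero (n : nat) : z2tuple n := [ffun _ => false].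

Definition p3adj (i j : 'I_3) : bool := (i.+1 == j :> nat) || (j.+1 == i :> nat).

Definition vertex (n : nat) := {ffun 'I_n -> 'I_3}.

Definition neps_adj (n : nat) (Om : {set z2tuple n}) (x y : vertex n) : bool :=
  [exists b in Om, [forall i, if b i then p3adj (x i) (y i) else x i == y i]].

Fixpoint adjpow (n : nat) (Om : {set z2tuple n}) (k : nat) (x y : vertex n) : nat :=
  match k with
  | 0 => nat_of_bool (x == y)
  | k'.+1 => \sum_(w : vertex n | neps_adj Om x w) adjpow Om k' w y
  end.

Local Open Scope R_scope.

(* Real and imaginary parts of U(t) = exp(i t A) = cos(tA) + i sin(tA),
   written as the power series of the matrix exponential (A is real). *)
Definition cos_term (n : nat) (Om : {set z2tuple n}) (t : R) (x y : vertex n) (k : nat) : R :=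
  (-1) ^ k * t ^ (2 * k)%nat / INR (fact (2 * k)) * INR (adjpow Om (2 * k) x y).

Definition sin_term (n : nat) (Om : {set z2tuple n}) (t : R) (x y : vertex n) (k : nat) : R :=
  (-1) ^ k * t ^ (2 * k + 1)%nat / INR (fact (2 * k + 1)) * INR (adjpow Om (2 * k + 1) x y).

Definition pst (n : nat) (Om : {set z2tuple n}) (x y : vertex n) : Prop :=
  exists t c s : R,
    0 < t /\ infinite_sum (cos_term Om t x y) c /\
    infinite_sum (sin_term Om t x y) s /\ c ^ 2 + s ^ 2 = 1.

(* Main.v *)
Require Import Defs.

From mathcomp Require Import all_boot.
From Stdlib Require Import Reals.
From HB Require Import structures.
From Stdlib Require Import Reals Lra Lia.

Set Implicit Arguments.
Unset Strict Implicit.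
Unset Printing Implicit Defensive.

Open Scope R_scope.

HB.instance Definition _ := Monoid.isComLaw.Build R 0 Rplus (fun x y z => esym (Rplus_assoc x y z)) Rplus_comm Rplus_0_l.
HB.instance Definition _ := Monoid.isComLaw.Build R 1 Rmult (fun x y z => esym (Rmult_assoc x y z)) Rmult_comm Rmult_1_l.
HB.instance Definition _ := Monoid.isMulLaw.Build R 0 Rmult Rmult_0_l Rmult_0_r.
HB.instance Definition _ := Monoid.isAddLaw.Build R Rmult Rplus Rmult_plus_distr_r Rmult_plus_distr_l.

Lemma big_distrlR (I : Type) (r : seq I) (P : pred I) (F : I -> R) a :
  \big[Rplus/0]_(i <- r | P i) F i * a = \big[Rplus/0]_(i <- r | P i) (F i * a).
Proof. exact: big_distrl. Qed.
Lemma big_distrrR (I : Type) (r : seq I) (P : pred I) (F : I -> R) a :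
  a * \big[Rplus/0]_(i <- r | P i) F i = \big[Rplus/0]_(i <- r | P i) (a * F i).
Proof. exact: big_distrr. Qed.
Lemma bigA_distrR (I J : finType) (F : I -> J -> R) :
  \big[Rmult/1]_(i : I) \big[Rplus/0]_(j : J) F i j
    = \big[Rplus/0]_(f : {ffun I -> J}) \big[Rmult/1]_i F i (f i).
Proof. exact: bigA_distr_bigA. Qed.

Definition r2 := sqrt 2.
Lemma r2r2 : r2 * r2 = 2. Proof. apply sqrt_sqrt; lra. Qed.
Lemma r2pos : 0 < r2. Proof. apply Rlt_sqrt2_0. Qed.

Definition o0 : 'I_3 := @Ordinal 3 0 isT.
Definition o1 : 'I_3 := @Ordinal 3 1 isT.
Definition o2 : 'I_3 := @Ordinal 3 2 isT.

Lemma I3_cases (a : 'I_3) : a = o0 \/ a = o1 \/ a = o2.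
Proof.
case: a => [[|[|[|m]]] Hm].
- by left; apply: val_inj.
- by right; left; apply: val_inj.
- by right; right; apply: val_inj.
- by [].
Qed.

Definition phin (a b : nat) : R :=
  match a, b with
  | 0, 0 => /2 | 0, 1 => r2/2 | 0, _ => /2
  | 1, 0 => r2/2 | 1, 1 => 0 | 1, _ => -(r2/2)
  | _, 0 => /2 | _, 1 => -(r2/2) | _, _ => /2
  end.
Definition phi (a b : 'I_3) : R := phin a b.
Definition mu (a : 'I_3) : R := match nat_of_ord a with 0 => r2 | 1 => 0 | _ => - r2 end.
Definition Mx (bt : bool) (p c : 'I_3) : R :=
  if (if bt then p3adj p c else p == c) then 1 else 0.

Lemma sum3 (F : 'I_3 -> R) : \big[Rplus/0]_(a : 'I_3) F a = F o0 + F o1 + F o2.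
Proof.
rewrite !big_ord_recl big_ord0.
have -> : lift ord0 ord0 = o1 :> 'I_3 by apply: val_inj.
have -> : lift ord0 (lift ord0 ord0) = o2 :> 'I_3 by apply: val_inj.
have -> : ord0 = o0 by apply: val_inj.
rewrite Rplus_0_r; ring.
Qed.

Lemma compl (p q : 'I_3) :
  \big[Rplus/0]_(a : 'I_3) (phi a p * phi a q) = if p == q then 1 else 0.
Proof.
rewrite sum3; have H := r2r2.
by case: (I3_cases p) => [->|[->|->]]; case: (I3_cases q) => [->|[->|->]];
  rewrite /phi /=; nra.
Qed.

Lemma eig (bt : bool) (p a : 'I_3) :
  \big[Rplus/0]_(c : 'I_3) (Mx bt p c * phi a c) = (if bt then mu a else 1) * phi a p.
Proof.
rewrite sum3; have H := r2r2.
case: (I3_cases a) => [->|[->|->]]; case: (I3_cases p) => [->|[->|->]]; case: bt;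
  rewrite /Mx /phi /mu /p3adj /=; nra.
Qed.

Section Spec.
Variable n : nat.
Variable Om : {set z2tuple n}.

Definition Phi (j x : vertex n) : R := \big[Rmult/1]_i phi (j i) (x i).
Definition lam (j : vertex n) : R :=
  \big[Rplus/0]_(b in Om) \big[Rmult/1]_i (if b i then mu (j i) else 1).

Lemma prod_ind (I : finType) (C : pred I) (F : I -> R) :
  \big[Rmult/1]_i (if C i then F i else 0) =
  if [forall i, C i] then \big[Rmult/1]_i F i else 0.
Proof.
case: (boolP [forall i, C i]) => [/forallP H | /forallPn [i Hi]].
- by apply: eq_bigr => i _; rewrite H.
- by rewrite (bigD1 i) //= (negbTE Hi) Rmult_0_l.
Qed.

Lemma p3adj_neq (p c : 'I_3) : p3adj p c -> p != c.
Proof.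
by case: (I3_cases p) => [->|[->|->]]; case: (I3_cases c) => [->|[->|->]].
Qed.

Lemma cond_b (b : z2tuple n) (x w : vertex n) i :
  (if b i then p3adj (x i) (w i) else x i == w i) -> b i = (x i != w i).
Proof.
case: (b i) => H; first by rewrite (p3adj_neq H).
by rewrite H.
Qed.

Lemma adj_ind (x w : vertex n) :
  (if neps_adj Om x w then 1 else 0) =
  \big[Rplus/0]_(b in Om) \big[Rmult/1]_i Mx (b i) (x i) (w i).
Proof.
have E : forall b : z2tuple n, \big[Rmult/1]_i Mx (b i) (x i) (w i) =
   if [forall i, if b i then p3adj (x i) (w i) else x i == w i] then 1 else 0.
  move=> b; rewrite /Mx prod_ind; case: ifP => // _; exact: big1.
rewrite /neps_adj; case: (boolP [exists b in Om, _]).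
- case/existsP => b0 /andP [b0in H0].
  rewrite (bigD1 b0) //= E H0 big1 ?Rplus_0_r // => b /andP [bin bne].
  rewrite E; case: ifP => // /forallP Hb; exfalso.
  move/eqP: bne; apply; apply/ffunP => i.
  rewrite (cond_b (Hb i)); move/forallP: H0 => H0; by rewrite (cond_b (H0 i)).
- move/existsPn => H; rewrite big1 // => b bin; rewrite E.
  by move: (H b); rewrite bin /= => /negbTE ->.
Qed.

Lemma eigen (j x : vertex n) :
  \big[Rplus/0]_(w : vertex n)
    ((\big[Rplus/0]_(b in Om) \big[Rmult/1]_i Mx (b i) (x i) (w i)) * Phi j w)
  = lam j * Phi j x.
Proof.
under eq_bigr do rewrite big_distrlR.
rewrite exchange_big /lam big_distrlR; apply: eq_bigr => b _.
under eq_bigr => w _ do rewrite /Phi -big_split.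
rewrite -(bigA_distrR (fun i c => Mx (b i) (x i) c * phi (j i) c)) /=.
under eq_bigr do rewrite eig.
by rewrite big_split.
Qed.

Lemma INR_sum (I : finType) (P : pred I) (f : I -> nat) :
  INR (\sum_(i | P i) f i) = \big[Rplus/0]_(i | P i) INR (f i).
Proof. by rewrite (big_morph INR plus_INR (erefl (INR 0))). Qed.

Lemma adjpow_spec k (x y : vertex n) :
  INR (adjpow Om k x y) = \big[Rplus/0]_(j : vertex n) (lam j ^ k * (Phi j x * Phi j y)).
Proof.
elim: k x => [|k IH] x /=.
- under eq_bigr do rewrite Rmult_1_l /Phi -big_split.
  rewrite -(bigA_distrR (fun i a => phi a (x i) * phi a (y i))) /=.
  under eq_bigr do rewrite compl.
  rewrite prod_ind big1 //.
  case: (boolP (x == y)) => [/eqP -> | Hxy].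
    case: forallP => [_|H]; first reflexivity.
    by exfalso; apply: H => i; apply: eqxx.
  case: forallP => H; last reflexivity.
  exfalso; move/eqP: Hxy; apply; apply/ffunP => i.
  exact/eqP/H.
- rewrite INR_sum big_mkcond /=.
  transitivity (\big[Rplus/0]_(w : vertex n)
    ((if neps_adj Om x w then 1 else 0) * INR (adjpow Om k w y))).
    by apply: eq_bigr => w _; case: ifP => _; rewrite ?Rmult_1_l ?Rmult_0_l.
  under eq_bigr do rewrite IH adj_ind big_distrrR.
  rewrite exchange_big; apply: eq_bigr => j _.
  transitivity (lam j ^ k * Phi j y * \big[Rplus/0]_(w : vertex n)
    ((\big[Rplus/0]_(b in Om) \big[Rmult/1]_i Mx (b i) (x i) (w i)) * Phi j w)).
    rewrite big_distrrR; apply: eq_bigr => w _; ring.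
  rewrite eigen /=; ring.
Qed.
End Spec.

From Stdlib Require Import FunctionalExtensionality Factorial.
From Stdlib Require ZArith.

Lemma isum_ext (f g : nat -> R) l :
  (forall k, f k = g k) -> infinite_sum f l -> infinite_sum g l.
Proof. by move=> H; have -> : g = f by apply: functional_extensionality => k; rewrite H. Qed.

Lemma isum_plus (f g : nat -> R) a b :
  infinite_sum f a -> infinite_sum g b -> infinite_sum (fun k => f k + g k) (a + b).
Proof.
move=> Hf Hg.
have E : (fun N => sum_f_R0 (fun k => f k + g k) N) =
         (fun N => sum_f_R0 f N + sum_f_R0 g N).
  by apply: functional_extensionality => N; rewrite sum_plus.
change (Un_cv (fun N => sum_f_R0 (fun k => f k + g k) N) (a + b)).
rewrite E; exact: CV_plus.
Qed.

Lemma isum_scal (f : nat -> R) a c :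
  infinite_sum f a -> infinite_sum (fun k => c * f k) (c * a).
Proof.
move=> Hf.
have E : (fun N => sum_f_R0 (fun k => c * f k) N) =
         (fun N => c * sum_f_R0 f N).
  apply: functional_extensionality => N; rewrite scal_sum.
  by apply: sum_eq => i _; ring.
change (Un_cv (fun N => sum_f_R0 (fun k => c * f k) N) (c * a)).
rewrite E; apply: CV_mult => //.
move=> eps Heps; exists 0%nat => m _; rewrite /R_dist Rminus_diag Rabs_R0; lra.
Qed.

Lemma isum_zero : infinite_sum (fun _ => 0) 0.
Proof.
move=> eps Heps; exists 0%nat => m _; rewrite sum_cte Rmult_0_l /R_dist Rminus_diag Rabs_R0; lra.
Qed.

Lemma isum_big (I : Type) (r : seq I) (P : pred I) (f : I -> nat -> R) (l : I -> R) :
  (forall i, infinite_sum (f i) (l i)) ->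
  infinite_sum (fun k => \big[Rplus/0]_(i <- r | P i) f i k) (\big[Rplus/0]_(i <- r | P i) l i).
Proof.
move=> H; elim: r => [|i r IH].
- rewrite big_nil; apply: isum_ext isum_zero => k; by rewrite big_nil.
- rewrite big_cons; case Pi: (P i).
  + apply: isum_ext (isum_plus (H i) IH) => k; by rewrite big_cons Pi.
  + apply: isum_ext IH => k; by rewrite big_cons Pi.
Qed.

Lemma cos_ser a :
  infinite_sum (fun k => (-1) ^ k * a ^ (2 * k) / INR (fact (2 * k))) (cos a).
Proof.
rewrite /cos; case: (exist_cos (Rsqr a)) => l H.
apply: isum_ext H => k; rewrite /cos_n /Rsqr.
have -> : Nat.mul 2 k = (2 * k)%nat by [].
rewrite pow_mult.
replace (a ^ 2) with (a * a) by ring; rewrite /Rdiv; ring.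
Qed.

Lemma sin_ser a :
  infinite_sum (fun k => (-1) ^ k * a ^ (2 * k + 1) / INR (fact (2 * k + 1))) (sin a).
Proof.
rewrite /sin; case: (exist_sin (Rsqr a)) => l H.
apply: isum_ext (isum_scal a H) => k; rewrite /sin_n /Rsqr.
have -> : Nat.add (Nat.mul 2 k) 1 = (2 * k + 1)%nat by [].
rewrite pow_add pow_mult.
replace (a ^ 2) with (a * a) by ring; rewrite /Rdiv. Show. ring.
Qed.

Lemma c_val n (Om : {set z2tuple n}) t (x y : vertex n) c :
  infinite_sum (Defs.cos_term Om t x y) c ->
  c = \big[Rplus/0]_(j : vertex n) (Phi j x * Phi j y * cos (t * lam Om j)).
Proof.
move=> Hc; apply: (uniqueness_sum _ _ _ Hc).
apply: (@isum_ext (fun k => \big[Rplus/0]_(j : vertex n) (Phi j x * Phi j y *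
   ((-1) ^ k * (t * lam Om j) ^ (2 * k) / INR (fact (2 * k)))))); last first.
  apply: isum_big => j; apply: isum_scal; exact: cos_ser.
move=> k; rewrite /Defs.cos_term adjpow_spec big_distrrR; apply: eq_bigr => j _.
rewrite Rpow_mult_distr /Rdiv; ring.
Qed.

Lemma s_val n (Om : {set z2tuple n}) t (x y : vertex n) s :
  infinite_sum (Defs.sin_term Om t x y) s ->
  s = \big[Rplus/0]_(j : vertex n) (Phi j x * Phi j y * sin (t * lam Om j)).
Proof.
move=> Hc; apply: (uniqueness_sum _ _ _ Hc).
apply: (@isum_ext (fun k => \big[Rplus/0]_(j : vertex n) (Phi j x * Phi j y *
   ((-1) ^ k * (t * lam Om j) ^ (2 * k + 1) / INR (fact (2 * k + 1)))))); last first.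
  apply: isum_big => j; apply: isum_scal; exact: sin_ser.
move=> k; rewrite /Defs.sin_term adjpow_spec big_distrrR; apply: eq_bigr => j _.
rewrite Rpow_mult_distr /Rdiv; ring.
Qed.

Lemma big_leR (I : Type) (r : seq I) (P : pred I) (F G : I -> R) :
  (forall i, P i -> F i <= G i) ->
  \big[Rplus/0]_(i <- r | P i) F i <= \big[Rplus/0]_(i <- r | P i) G i.
Proof. move=> H; apply: (big_ind2 (fun a b => a <= b)) => //; [lra | move=> *; lra]. Qed.

Lemma big_geR0 (I : Type) (r : seq I) (P : pred I) (F : I -> R) :
  (forall i, P i -> 0 <= F i) -> 0 <= \big[Rplus/0]_(i <- r | P i) F i.
Proof. move=> H; apply: (big_ind (fun a => 0 <= a)) => //; [lra | move=> *; lra]. Qed.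

Lemma prod_01 (I : Type) (r : seq I) (P : pred I) (F : I -> R) :
  (forall i, P i -> 0 <= F i <= 1) -> 0 <= \big[Rmult/1]_(i <- r | P i) F i <= 1.
Proof. move=> H; apply: (big_ind (fun a => 0 <= a <= 1)) => //; [lra | move=> *; nra]. Qed.

Lemma prod_nz (I : Type) (r : seq I) (P : pred I) (F : I -> R) :
  (forall i, P i -> F i <> 0) -> \big[Rmult/1]_(i <- r | P i) F i <> 0.
Proof.
move=> H; apply: (big_ind (fun a => a <> 0)); [lra | | exact: H].
move=> a b Ha Hb; exact: Rmult_integral_contrapositive_currified.
Qed.

Lemma sum_le0_eq (I : finType) (F : I -> R) :
  (forall i, 0 <= F i) -> \big[Rplus/0]_i F i <= 0 -> forall i, F i = 0.
Proof.
move=> H0 Hs i; rewrite (bigD1 i) //= in Hs.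
have := @big_geR0 _ (index_enum I) (fun j => j != i) F (fun j _ => H0 j).
have := H0 i; lra.
Qed.

Lemma abs_prod_le a b : Rabs (a * b) <= (a * a + b * b) / 2.
Proof. have := Rle_0_sqr (a - b); have := Rle_0_sqr (a + b); rewrite /Rsqr; unfold Rabs; destruct (Rcase_abs (a * b)); lra. Qed.

Lemma coord_le1 (p q : 'I_3) :
  0 <= \big[Rplus/0]_(a : 'I_3) Rabs (phi a p * phi a q) <= 1.
Proof.
split; first by apply: big_geR0 => a _; apply: Rabs_pos.
have Hp := compl p p; have Hq := compl q q; rewrite eqxx sum3 in Hp; rewrite eqxx sum3 in Hq.
rewrite sum3.
have := abs_prod_le (phi o0 p) (phi o0 q); have := abs_prod_le (phi o1 p) (phi o1 q);
have := abs_prod_le (phi o2 p) (phi o2 q); lra.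
Qed.

Lemma absw_le1 n (x y : vertex n) :
  \big[Rplus/0]_(j : vertex n) Rabs (Phi j x * Phi j y) <= 1.
Proof.
transitivity (\big[Rmult/1]_(i : 'I_n) \big[Rplus/0]_(a : 'I_3) Rabs (phi a (x i) * phi a (y i))).
  rewrite (bigA_distrR (fun i a => Rabs (phi a (x i) * phi a (y i)))).
  apply: Req_le; apply: eq_bigr => j _.
  rewrite /Phi -big_split /=.
  by rewrite (big_morph Rabs Rabs_mult Rabs_R1).
by have [] := @prod_01 _ (index_enum 'I_n) xpredT _ (fun i _ => coord_le1 (x i) (y i)).
Qed.

Lemma phase (J : finType) (w th : J -> R) :
  \big[Rplus/0]_j Rabs (w j) <= 1 ->
  (\big[Rplus/0]_j (w j * cos (th j))) ^ 2 + (\big[Rplus/0]_j (w j * sin (th j))) ^ 2 = 1 ->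
  forall j k, w j <> 0 -> w k <> 0 -> sin (th j - th k) = 0.
Proof.
set W := \big[Rplus/0]_j Rabs (w j).
set c := \big[Rplus/0]_j (w j * cos (th j)).
set s := \big[Rplus/0]_j (w j * sin (th j)).
move=> HW Hcs.
pose D j k := Rabs (w j) * Rabs (w k) - w j * w k * cos (th j - th k).
have HD : forall j k, 0 <= D j k.
  move=> j k; rewrite /D.
  have H1 := Rle_abs (w j * w k * cos (th j - th k)).
  rewrite !Rabs_mult in H1.
  have H2 : Rabs (cos (th j - th k)) <= 1 by apply: Rabs_le; have := COS_bound (th j - th k); lra.
  have H3 : 0 <= Rabs (w j) * Rabs (w k) by apply: Rmult_le_pos; apply: Rabs_pos.
  have H4 : Rabs (w j) * Rabs (w k) * Rabs (cos (th j - th k)) <= Rabs (w j) * Rabs (w k).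
    rewrite -{2}(Rmult_1_r (Rabs (w j) * Rabs (w k))); apply: Rmult_le_compat_l => //.
  lra.
have HW0 : 0 <= W by apply: big_geR0 => j _; apply: Rabs_pos.
have E : W * W = c * c + s * s + \big[Rplus/0]_j \big[Rplus/0]_k D j k.
  rewrite /W /c /s !big_distrlR -!big_split /=; apply: eq_bigr => j _.
  rewrite !big_distrrR -!big_split /=; apply: eq_bigr => k _.
  rewrite /D cos_minus; ring.
have Hsum : \big[Rplus/0]_j \big[Rplus/0]_k D j k <= 0 by nra.
move=> j k Hj Hk.
have Hj0 := sum_le0_eq (fun j => @big_geR0 _ (index_enum J) xpredT (D j) (fun k _ => HD j k)) Hsum j.
have Hjk := sum_le0_eq (fun k => HD j k) (Req_le _ _ Hj0) k.
rewrite /D in Hjk.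
have Hp : 0 < Rabs (w j * w k) by apply: Rabs_pos_lt; exact: Rmult_integral_contrapositive_currified.
have Hc1 : Rabs (cos (th j - th k)) = 1.
  have H1 : Rabs (w j * w k) = w j * w k * cos (th j - th k) by rewrite Rabs_mult; lra.
  have H2 : Rabs (w j * w k) = Rabs (w j * w k) * Rabs (cos (th j - th k)).
    by rewrite -Rabs_mult {1}H1 Rabs_right //; rewrite -H1; apply: Rle_ge; apply: Rabs_pos.
  nra.
have := sin2_cos2 (th j - th k); rewrite /Rsqr.
have : cos (th j - th k) * cos (th j - th k) = 1.
  by move: Hc1; rewrite /Rabs; case: Rcase_abs => _ H; nra.
nra.
Qed.

Lemma phi_nz (a p : 'I_3) : (a == o1) ==> (p != o1) -> phi a p <> 0.
Proof.
have H := r2pos.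
by case: (I3_cases a) => [->|[->|->]]; case: (I3_cases p) => [->|[->|->]];
  rewrite /phi /= => // _; lra.
Qed.

Section Char.
Variables (n : nat) (Om : {set z2tuple n}) (x y : vertex n) (b0 : z2tuple n).

Definition jsig (s : z2tuple n) : vertex n :=
  [ffun i => if b0 i || (x i == o1) || (y i == o1) then (if s i then o0 else o2) else o1].
Definition sgn (s : z2tuple n) : R :=
  \big[Rmult/1]_i (if b0 i then (if s i then 1 else -1) else 1).
Definition Pb : R := \big[Rmult/1]_i (if b0 i then 2 * r2 else 2).

Lemma sum_factor (F : 'I_n -> bool -> R) :
  \big[Rplus/0]_(s : z2tuple n) \big[Rmult/1]_i F i (s i) =
  \big[Rmult/1]_i (F i true + F i false).
Proof. rewrite -(bigA_distrR F); apply: eq_bigr => i _; by rewrite big_bool. Qed.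

Lemma sum_sgn : (exists i, b0 i) -> \big[Rplus/0]_(s : z2tuple n) sgn s = 0.
Proof.
case=> i0 Hi0.
rewrite /sgn (sum_factor (fun i bt => if b0 i then (if bt then 1 else -1) else 1)).
by rewrite (bigD1 i0) //= Hi0 Rplus_opp_r Rmult_0_l.
Qed.

Definition G (b : z2tuple n) i bt : R :=
  (if b0 i then (if bt then 1 else -1) else 1) *
  (if b i then mu (if b0 i || (x i == o1) || (y i == o1) then (if bt then o0 else o2) else o1)
   else 1).

Lemma Gval (b : z2tuple n) i : G b i true + G b i false =
  if b i == b0 i then (if b0 i then 2 * r2 else 2) else 0.
Proof.
by rewrite /G; case: (b i); case: (b0 i); case: (x i == o1); case: (y i == o1);
  rewrite /mu /=; lra.
Qed.

Lemma sum_b (b : z2tuple n) :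
  \big[Rplus/0]_(s : z2tuple n) (sgn s * \big[Rmult/1]_i (if b i then mu (jsig s i) else 1))
  = if b == b0 then Pb else 0.
Proof.
transitivity (\big[Rplus/0]_(s : z2tuple n) \big[Rmult/1]_i G b i (s i)).
  apply: eq_bigr => s _; rewrite /sgn -big_split /=; apply: eq_bigr => i _.
  by rewrite /G ffunE.
rewrite sum_factor.
under eq_bigr do rewrite Gval.
rewrite prod_ind.
have -> : [forall i, b i == b0 i] = (b == b0).
  apply/forallP/eqP => [H|-> i //]; apply/ffunP => i; exact/eqP/H.
by [].
Qed.

Lemma sum_sgn_lam : b0 \in Om ->
  \big[Rplus/0]_(s : z2tuple n) (sgn s * lam Om (jsig s)) = Pb.
Proof.
move=> Hb; rewrite /lam.
under eq_bigr do rewrite big_distrrR.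
rewrite exchange_big /=.
under eq_bigr do rewrite sum_b.
rewrite (bigD1 b0) //= eqxx big1 ?Rplus_0_r // => b /andP [_ /negbTE ->] //.
Qed.

Lemma w_nz s : Phi (jsig s) x * Phi (jsig s) y <> 0.
Proof.
apply: Rmult_integral_contrapositive_currified; apply: prod_nz => i _;
  rewrite ffunE; apply: phi_nz; (case: ifP => [_|/negbT]; first by case: (s i)).
- by rewrite !negb_or => /andP [/andP [_ ->] _].
- by rewrite !negb_or => /andP [_ ->].
Qed.

End Char.

Definition isInt (r : R) := exists z : Z, r = IZR z.

Lemma isInt_sum (I : Type) (r : seq I) (P : pred I) (F : I -> R) :
  (forall i, P i -> isInt (F i)) -> isInt (\big[Rplus/0]_(i <- r | P i) F i).
Proof.
move=> H; apply: (big_ind isInt); [by exists 0%Z | | exact: H].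
by move=> a b [za ->] [zb ->]; exists (za + zb)%Z; rewrite plus_IZR.
Qed.

Lemma isInt_mul a b : isInt a -> isInt b -> isInt (a * b).
Proof. by move=> [za ->] [zb ->]; exists (za * zb)%Z; rewrite mult_IZR. Qed.

Lemma isInt_sgn n (b0 s : z2tuple n) : isInt (sgn b0 s).
Proof.
apply: (big_ind isInt); [by exists 1%Z | exact: isInt_mul | ].
move=> i _; case: (b0 i); last by exists 1%Z.
by case: (s i); [exists 1%Z | exists (-1)%Z].
Qed.

Lemma int_t n (Om : {set z2tuple n}) (x y : vertex n) t (b0 : z2tuple n) :
  b0 \in Om -> (exists i, b0 i) ->
  (forall j k : vertex n, Phi j x * Phi j y <> 0 -> Phi k x * Phi k y <> 0 ->
     sin (t * lam Om j - t * lam Om k) = 0) ->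
  isInt (t * Pb b0 / PI).
Proof.
move=> Hb Hex Hph.
set j0 := jsig x y b0 [ffun _ => true].
have HPI : PI <> 0 by have := PI_RGT_0; lra.
have Hd : forall s, isInt ((t * lam Om (jsig x y b0 s) - t * lam Om j0) / PI).
  move=> s; have [k Hk] := sin_eq_0_0 _ (Hph _ _ (@w_nz _ x y b0 s) (@w_nz _ x y b0 [ffun _ => true])).
  by exists k; rewrite Hk; field.
have -> : t * Pb b0 / PI = \big[Rplus/0]_(s : z2tuple n)
     (sgn b0 s * ((t * lam Om (jsig x y b0 s) - t * lam Om j0) / PI)).
  transitivity (\big[Rplus/0]_(s : z2tuple n)
     (sgn b0 s * lam Om (jsig x y b0 s) * (t / PI) + sgn b0 s * (- (t * lam Om j0 / PI)))); last first.
    by apply: eq_bigr => s _; field.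
  rewrite big_split /= -!big_distrlR.
  by rewrite sum_sgn_lam // sum_sgn //; field.
apply: isInt_sum => s _; apply: isInt_mul; [exact: isInt_sgn | exact: Hd].
Qed.

Lemma iter_pow (a : R) m : iter m (Rmult a) 1 = a ^ m.
Proof. by elim: m => //= m ->. Qed.

Lemma Pb_val n (b : z2tuple n) : Pb b = 2 ^ n * r2 ^ (hweight b).
Proof.
rewrite /Pb.
transitivity (\big[Rmult/1]_(i < n) 2 * \big[Rmult/1]_(i < n) (if b i then r2 else 1)).
  rewrite -big_split; apply: eq_bigr => i _ /=; case: (b i); ring.
rewrite big_const_ord iter_pow -big_mkcond big_const iter_pow /hweight.
congr (_ * r2 ^ _); apply: eq_card => i; by rewrite inE.
Qed.

Lemma r2_double a : r2 ^ (a.*2) = 2 ^ a.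
Proof.
elim: a => [|a IH] //; rewrite doubleS /= IH.
transitivity ((r2 * r2) * 2 ^ a); first ring.
by rewrite r2r2.
Qed.

Lemma isInt_pow2 k : isInt (2 ^ k).
Proof. elim: k => [|k IH] /=; [by exists 1%Z | apply: isInt_mul IH; by exists 2%Z]. Qed.

Lemma irr_nat (a b : nat) : leq 1 b -> muln a a = muln (muln b b) 2 -> False.
Proof.
move=> Hb H.
have Ha : leq 1 a.
  case: a H => // /esym /eqP; rewrite !muln_eq0 /= orbF => /orP [] /eqP Hb0;
  by rewrite Hb0 in Hb.
have := congr1 (logn 2) H.
rewrite !lognM ?muln_gt0 ?Ha ?Hb // (@logn_prime 2 2) //=.
move=> E; have := congr1 odd E; rewrite !oddD /=.
by case: (odd (logn 2 a)); case: (odd (logn 2 b)).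
Qed.

Lemma irr (A B : Z) : B <> 0%Z -> IZR A = IZR B * r2 -> False.
Proof.
move=> HB H.
have Hsq : IZR (A * A) = IZR (B * B * 2).
  rewrite !mult_IZR H.
  transitivity (IZR B * IZR B * (r2 * r2)); first ring.
  by rewrite r2r2.
have HZ := eq_IZR _ _ Hsq.
have HN := congr1 Z.abs_nat HZ.
rewrite !Znat.Zabs2Nat.inj_mul /= in HN.
apply: (@irr_nat (Z.abs_nat A) (Z.abs_nat B)); last exact: HN.
case E: (Z.abs_nat B) => //; exfalso; apply: HB; lia.
Qed.

Lemma final t Ne No : 0 < t -> 0 < Ne -> 0 < No -> isInt Ne -> isInt No ->
  isInt (t * Ne / PI) -> isInt (t * (No * r2) / PI) -> False.
Proof.
move=> Ht HNe HNo [ne Ene] [no Eno] [ze Hze] [zo Hzo].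
have HPI := PI_RGT_0.
have Hze0 : 0 < IZR ze by rewrite -Hze; apply: Rdiv_lt_0_compat => //; nra.
apply: (@irr (zo * ne) (ze * no)).
  move=> H0; have := congr1 IZR H0; rewrite mult_IZR -Eno /=; nra.
rewrite !mult_IZR -Ene -Eno -Hze -Hzo; field; lra.
Qed.

Lemma nz_ex n (b : z2tuple n) : b != z2zero n -> exists i, b i.
Proof.
move=> H; case: (boolP [exists i, b i]) => [/existsP //|/existsPn H'].
exfalso; move/eqP: H; apply; apply/ffunP => i; rewrite ffunE; exact/negbTE/H'.
Qed.

Close Scope R_scope.

Theorem theorem2p3 (n : nat) (hn : (1 <= n)%N) (Oe Oo : {set z2tuple n}) :
  Oe != set0 -> Oo != set0 ->
  (forall b, b \in Oe -> ~~ odd (hweight b)) ->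
  (forall b, b \in Oo -> odd (hweight b)) ->
  (forall b, b \in Oe :|: Oo -> b != z2zero n) ->
  forall u v : vertex n, u <> v -> ~ pst (Oe :|: Oo) u v.
Proof.
move=> HOe HOo He Ho Hz u v _ [t [c [s [Ht [Hc [Hs Hcs]]]]]].
rewrite (c_val Hc) (s_val Hs) in Hcs.
have Hph := @phase (vertex n) (fun j => Phi j u * Phi j v)%R
   (fun j => t * lam (Oe :|: Oo) j)%R (absw_le1 u v) Hcs.
case/set0Pn: HOe => be Hbe; case/set0Pn: HOo => bo Hbo.
have Hbe' : be \in Oe :|: Oo by rewrite inE Hbe.
have Hbo' : bo \in Oe :|: Oo by rewrite inE Hbo orbT.
have Ie := int_t Hbe' (nz_ex (Hz _ Hbe')) Hph.
have Io := int_t Hbo' (nz_ex (Hz _ Hbo')) Hph.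
rewrite Pb_val in Ie; rewrite Pb_val in Io.
have Eeven := odd_double_half (hweight be); rewrite (negbTE (He _ Hbe)) add0n in Eeven.
have Eodd := odd_double_half (hweight bo); rewrite (Ho _ Hbo) add1n in Eodd.
rewrite -Eeven r2_double in Ie.
rewrite -Eodd /= r2_double in Io.
have Io' : isInt (t * ((2 ^ n * 2 ^ (hweight bo)./2) * r2) / PI)%R.
  by move: Io; congr isInt; rewrite /Rdiv; ring.
have P2 : forall k, (0 < 2 ^ k)%R by move=> k; apply: pow_lt; lra.
apply: (final Ht _ _ _ _ Ie Io').
- exact: Rmult_lt_0_compat.
- exact: Rmult_lt_0_compat.
- exact: isInt_mul (isInt_pow2 _) (isInt_pow2 _).
- exact: isInt_mul (isInt_pow2 _) (isInt_pow2 _).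
Qed.
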